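(* Let $t$, $l$, $n$ be positive integers with $t \geq 2l$, and put $t' = [t/l]$. Then for every integer $p > \frac{t'n-1}{t'-1}$ we have $R_{t-l,t}(K_{1,n}) \leq p$.
   Context: $[a]$ denotes the integer part (floor) of a real number $a$. $K_{1,n}$ is the star with $n$ edges. For a graph $G$ and integers $1 \leq s < t$, $R_{s,t}(G)$ is the smallest positive integer $N$ such that every coloring of the edges of the complete graph $K_N$ with $t$ colors contains a (not necessarily induced) subgraph isomorphic to $G$ whose edges use at most $s$ distinct colors. *)

(* Defs.v *)
From mathcomp Require Import all_boot all_order all_algebra.
Set Implicit Arguments. Unset Strict Implicit. Unset Printing Implicit Defensive.

(* A t-edge-colouring of K_N: vertices 'I_N, colour of edge {i,j} is c i j
   (required symmetric; the diagonal value is irrelevant). *)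
Definition edge_coloring (N t : nat) (c : 'I_N -> 'I_N -> 'I_t) : Prop :=
  forall i j, c i j = c j i.

(* A (not necessarily induced) copy of G in K_N is an injective map
   f : V -> 'I_N; its colour set is the set of colours of the images of
   the edges of G. *)
Definition copy_colors (V : finType) (e : rel V) (N t : nat)
  (c : 'I_N -> 'I_N -> 'I_t) (f : V -> 'I_N) : {set 'I_t} :=
  [set c (f x.1) (f x.2) | x in [set x : V * V | e x.1 x.2]].

Definition ramsey_prop (s t : nat) (V : finType) (e : rel V) (N : nat) : Prop :=
  forall c : 'I_N -> 'I_N -> 'I_t, edge_coloring c ->
    exists f : V -> 'I_N, injective f /\ #|copy_colors e c f| <= s.

Definition is_Rst (s t : nat) (V : finType) (e : rel V) (N : nat) : Prop :=
  0 < N /\ ramsey_prop s t e N /\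
  (forall M, 0 < M -> ramsey_prop s t e M -> N <= M).

Definition star_rel (n : nat) : rel 'I_n.+1 :=
  fun x y => (x == ord0) != (y == ord0).

(* Main.v *)
Require Import Defs.
From mathcomp Require Import all_boot all_order all_algebra.
From mathcomp Require Import zify.
From Stdlib Require Import Classical.
Import GRing.Theory Num.Theory.

Lemma min_exists (P : nat -> Prop) p :
  P p -> exists N, P N /\ N <= p /\ (forall M, P M -> N <= M).
Proof.
elim: p {-2}p (leqnn p) => [|m IH] q.
- rewrite leqn0 => /eqP -> H0; exists 0; split=> //.
- move=> Hq Pq; case: (classic (exists M, M < q /\ P M)).
  + case=> M [HM PM].
    have HMm : M <= m by rewrite -ltnS; apply: leq_trans HM Hq.
    have [N [PN [HN Hmin]]] := IH M HMm PM.
    exists N; split=> //; split=> //; exact: leq_trans HN (ltnW HM).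
  + move=> Hn; exists q; split=> //; split=> // M PM.
    rewrite leqNgt; apply/negP => HM; apply: Hn; by exists M.
Qed.

Lemma star_ramsey (t l n p T' : nat) (c : 'I_p -> 'I_p -> 'I_t) :
  0 < l -> T'.+1 * l <= t -> T'.+1 * n <= p * T' -> 0 < p ->
  edge_coloring c ->
  exists f : 'I_n.+1 -> 'I_p, injective f /\ #|copy_colors (@star_rel n) c f| <= t - l.
Proof.
move=> l0 Tl Tn p0 csym.
pose v0 : 'I_p := Ordinal p0.
pose g (col : 'I_t) : 'I_T'.+1 := inord (minn (col %/ l) T').
pose A (k : 'I_T'.+1) := [pred u : 'I_p | (u != v0) && (g (c v0 u) == k)].
have Hsum : \sum_(k < T'.+1) #|A k| = p.-1.
  have -> : p.-1 = #|predC1 v0| by rewrite cardC1 card_ord.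
  rewrite -sum1_card.
  rewrite (partition_big (fun u => g (c v0 u)) xpredT) //=.
  apply: eq_bigr => k _; rewrite -sum1_card; apply: eq_bigl => u; by rewrite !inE.
have [k Hk] : exists k : 'I_T'.+1, #|A k| + n <= p.-1.
  case: (boolP [exists k, #|A k| + n <= p.-1]) => [/existsP //|/existsPn H].
  have : \sum_(k < T'.+1) (p - n) <= p.-1.
    rewrite -Hsum; apply: leq_sum => k _; move: (H k); rewrite -ltnNge; lia.
  rewrite sum_nat_const card_ord => H2; exfalso; nia.
pose B := [pred u : 'I_p | (u != v0) && (g (c v0 u) != k)].
have HB : #|B| + #|A k| = p.-1.
  have -> : p.-1 = #|predC1 v0| by rewrite cardC1 card_ord.
  rewrite -(cardID [pred u | g (c v0 u) == k] (predC1 v0)) addnC.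
  congr (_ + _); apply: eq_card => u; rewrite !inE //; by rewrite andbC.
have Bn : n <= #|B| by lia.
pose s := enum B.
have ss : n <= size s by rewrite -cardE.
have us : uniq s := enum_uniq _.
pose f (x : 'I_n.+1) := if unlift ord0 x is Some i then nth v0 s i else v0.
have fB : forall i : 'I_n, nth v0 s i \in B.
  move=> i; rewrite -mem_enum; apply: mem_nth; exact: leq_trans (ltn_ord i) ss.
exists f; split.
  move=> x y; rewrite /f; case: unliftP => [i ->|->]; case: unliftP => [j ->|->] //.
  - move=> /eqP; rewrite nth_uniq //; try exact: leq_trans (ltn_ord _) ss.
    by move=> /eqP/val_inj ->.
  - move=> E; move: (fB i); by rewrite E inE eqxx.
  - move=> E; move: (fB j); by rewrite -E inE eqxx.
have gval : forall col : 'I_t, val (g col) = minn (col %/ l) T'.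
  move=> col; rewrite /g /= inordK // ltnS; exact: geq_minr.
apply: (@leq_trans #|[pred col : 'I_t | g col != k]|).
  apply: subset_leq_card; apply/subsetP => col /imsetP [[x y]].
  rewrite inE /= /star_rel => Hxy ->; rewrite inE.
  have f0 : f ord0 = v0 by rewrite /f unlift_none.
  have fy : forall z, z != ord0 -> f z \in B.
    move=> z Hz; rewrite /f; case: unliftP => [j Ej|Ej]; last by rewrite Ej eqxx in Hz.
    exact: fB.
  case: (boolP (x == ord0)) Hxy => [/eqP -> |Hx].
  - move=> Hy0; have Hy : y != ord0 by move: Hy0; case: (y == ord0).
    rewrite f0; move: (fy _ Hy); by rewrite inE => /andP [].
  - move=> Hy0; have /eqP -> : y == ord0 by move: Hy0; case: (y == ord0).
    rewrite f0 csym; move: (fy _ Hx); by rewrite inE => /andP [].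
have Hl : l <= #|[pred col : 'I_t | g col == k]|.
  have hlt : forall i : 'I_l, k * l + i < t.
    move=> i; have := ltn_ord i; have := ltn_ord k; nia.
  pose h (i : 'I_l) : 'I_t := Ordinal (hlt i).
  have hinj : injective h by move=> i j /(congr1 val) /= /addnI /val_inj.
  rewrite -{1}(card_ord l) -(card_imset _ hinj).
  apply: subset_leq_card; apply/subsetP => col /imsetP [i _ ->]; rewrite inE.
  apply/eqP/val_inj; rewrite gval /= divnMDl // divn_small // addn0.
  apply/minn_idPl; rewrite -ltnS; exact: ltn_ord.
have := cardC [pred col : 'I_t | g col == k]; rewrite card_ord.
have -> : #|[predC [pred col : 'I_t | g col == k]]| = #|[pred col : 'I_t | g col != k]|.
  by apply: eq_card => col; rewrite !inE.
have lt : l <= t by apply: leq_trans Tl; apply: leq_pmull.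
move=> E; rewrite leq_subRL //; apply: leq_trans _ (eq_leq E); by rewrite leq_add2r.
Qed.

Theorem theorem1 (t l n p : nat) :
  0 < t -> 0 < l -> 0 < n -> 2 * l <= t ->
  (((t %/ l * n)%:R - 1) / ((t %/ l)%:R - 1) < (p%:R : rat))%R ->
  exists N, is_Rst (t - l) t (@star_rel n) N /\ N <= p.
Proof.
move=> t0 l0 n0 lt H.
have T2 : 2 <= t %/ l.
  have := leq_div2r l lt; by rewrite mulnK.
have Tl : t %/ l * l <= t by exact: leq_divM.
move: T2 Tl H; case: (t %/ l) => [//|T'] T2 Tl H.
have HT : (((T'.+1)%:R - 1 : rat) = T'%:R)%R by rewrite -addn1 natrD addrK.
have T0 : (0 < (T'%:R : rat))%R by rewrite ltr0n.
rewrite HT ltr_pdivrMr // in H.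
rewrite -natrM ltrBlDr -(natrD _ _ 1) ltr_nat addn1 ltnS in H.
have p0 : 0 < p.
  case: p H => // H; rewrite mul0n in H; move: H; rewrite leqn0 muln_eq0 => /orP [//|/eqP n0']; by rewrite n0' in n0.
pose P M := 0 < M /\ ramsey_prop (t - l) t (@star_rel n) M.
have Pp : P p.
  split=> // c csym; exact: (@star_ramsey t l n p T' c l0 Tl H p0 csym).
have [N [[N0 RN] [Np Nmin]]] := @min_exists P p Pp.
exists N; split=> //; split=> //; split=> // M M0 RM; exact: Nmin.
Qed.
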